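(* Let $\epsilon\in(0,1)$, $C_0>0$ and $A\ge1$. There exist $\delta>0$, $N_0\in\mathbb N$ and $C>0$ such that for every $n\in\mathbb Z$ with $|n|\ge N_0$ and every dyadic number $M\ge1$, the Lebesgue measure of the set $$\{\mu\in\mathbb R:\ M/2\le|\mu|\le 2M,\ \exists\, r\in\mathbb Z \text{ with } A^{-1}|n|\le |r|\le A|n| \text{ and } |\mu-(r^3-r^2-2nr)|\le C_0|r|^{2-\epsilon}\}$$ is at most $CM^{1-\delta}$.
   Context: A dyadic number is one of the form $2^j$, $j\in\mathbb Z_{\ge0}$. *)

(* Defs.v *)
From HB Require Import structures.
From mathcomp Require Import all_boot all_order all_algebra.
From mathcomp Require Import all_classical all_reals all_analysis.
Set Implicit Arguments. Unset Strict Implicit. Unset Printing Implicit Defensive.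
Import Order.TTheory GRing.Theory Num.Theory.
Local Open Scope classical_set_scope.
Local Open Scope ring_scope.

Definition badset (R : realType) (eps C0 A : R) (n : int) (M : R) : set R :=
  [set mu : R | M / 2 <= `|mu| <= 2 * M /\
     exists r : int,
       A^-1 * `|n%:~R : R| <= `|r%:~R : R| <= A * `|n%:~R : R| /\
       `|mu - (r ^+ 3 - r ^+ 2 - 2 * n * r)%:~R| <= C0 * (`|r%:~R : R| `^ (2 - eps))].

(* Main.v *)
Require Import Defs.
From HB Require Import structures.
From mathcomp Require Import all_boot all_order all_algebra.
From mathcomp Require Import all_classical all_reals all_analysis.
From mathcomp Require Import ring lra zify.
Import Order.TTheory GRing.Theory Num.Theory.
Local Open Scope classical_set_scope.
Local Open Scope ring_scope.
Lemma leb_mono (R : realType) (A B : set R) : A `<=` B ->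
  (lebesgue_measure A <= lebesgue_measure B)%E.
Proof. move=> AB. rewrite /lebesgue_measure /lebesgue_stieltjes_measure /measure_extension.
exact: le_mu_ext. Qed.

Lemma leb_union (R : realType) (n : nat) (c : 'I_n -> R) (W : R) (X : set R) : 0 < W ->
  X `<=` \big[setU/set0]_(i < n) `[c i - W, c i + W]%classic ->
  (lebesgue_measure X <= ((W *+ 2) *+ n)%:E)%E.
Proof.
move=> W0 XU.
pose F := fun k : nat => if (k < n)%N =P true is ReflectT h then `[c (Ordinal h) - W, c (Ordinal h) + W]%classic else set0.
have FE : \big[setU/set0]_(i < n) `[c i - W, c i + W]%classic = \big[setU/set0]_(i < n) F i.
  apply: eq_bigr => i _; rewrite /F; case: eqP => [h|]; last by rewrite ltn_ord. by rewrite (_ : Ordinal h = i) // ; apply: val_inj.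
apply: (le_trans (@leb_mono R _ _ XU)).
rewrite FE.
have Fm k : measurable (F k).
  rewrite /F; case: eqP => // *; exact: measurable_itv.
have Fm' : forall k, (k < n)%N -> measurable (F k) by move=> k _; exact: Fm.
have Um : measurable (\big[setU/set0]_(i<n) F i).
  by apply: bigsetU_measurable => k _; exact: Fm.
have H := @content_subadditive _ R _ lebesgue_measure (\big[setU/set0]_(i<n) F i) F n Fm' Um (@subset_refl _ _).
apply: (le_trans H).
rewrite (eq_bigr (fun=> (W *+ 2)%:E)).
  by rewrite sumEFin big_const_ord iter_addr addr0.
move=> i _; rewrite /F; case: eqP => [h|]; last by rewrite ltn_ord.
have L := lebesgue_measure_itv `[c (Ordinal h) - W, c (Ordinal h) + W]. move: L. rewrite /= lte_fin => ->.
rewrite ifT; last by rewrite ltrBlDr -addrA ltrDl addr_gt0.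
rewrite -EFinB; congr (_%:E). lra.
Qed.

Lemma cube_bound (R : realType) (eps C0 A rho nu mu M : R) :
  0 < eps < 1 -> 0 < C0 -> 1 <= A ->
  3 + 4 * A + 4 * C0 <= `|rho| -> `|nu| <= A * `|rho| -> `|mu| <= 2 * M ->
  `|mu - (rho ^+ 3 - rho ^+ 2 - 2 * nu * rho)| <= C0 * (`|rho| `^ (2 - eps)) ->
  `|rho| ^+ 3 <= 8 * M.
Proof.
move=> /andP[e0 e1] C00 A1 hx hnu hmu hw.
set x := `|rho| in hx hnu hw *.
have x1 : 1 <= x by lra.
have hp : x `^ (2 - eps) <= x ^+ 2.
  rewrite -powR_mulrn; last lra.
  by apply: ler_powR => //; lra.
set g := rho ^+ 2 - rho - 2 * nu.
have hg : x ^+ 2 <= `|g| + x + 2 * `|nu|.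
  have -> : x ^+ 2 = `|g + rho + 2 * nu| by rewrite /g /x -normrX; congr `|_|; ring.
  apply: (le_trans (ler_normD _ _)); rewrite normrM ger0_norm //.
  by rewrite lerD2r; apply: (le_trans (ler_normD _ _)).
have hf : `|rho ^+ 3 - rho ^+ 2 - 2 * nu * rho| = x * `|g|.
  by rewrite /x -normrM; congr `|_|; rewrite /g; ring.
have hm : `|rho ^+ 3 - rho ^+ 2 - 2 * nu * rho| <= `|mu| + C0 * x ^+ 2.
  have -> : rho ^+ 3 - rho ^+ 2 - 2 * nu * rho = mu - (mu - (rho ^+ 3 - rho ^+ 2 - 2 * nu * rho)) by ring.
  apply: (le_trans (ler_normB _ _)); rewrite lerD2l.
  apply: (le_trans hw); rewrite ler_pM2l //.
rewrite hf in hm.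
have x0 : 0 <= x by lra.
have h1 : x * (x ^+ 2 - x - 2 * A * x) <= x * `|g|.
  rewrite ler_wpM2l //; nra.
nra.
Qed.

Lemma final_num (R : realType) (eps C0 : R) (j : nat) : 0 < eps < 1 -> 0 < C0 ->
  (C0 * (((2 ^ (j %/ 3 + 2))%N%:R : R) `^ (2 - eps))) *+ 2 *+ (2 ^ (j %/ 3 + 2))%N.*2.+1
   <= 6 * C0 * 2 `^ (2 * (3 - eps)) * ((2 ^+ j : R) `^ (1 - eps / 3)).
Proof.
move=> /andP[e0 e1] C00.
set q := (j %/ 3)%N.
have hq : 3 * (q%:R : R) <= j%:R.
  have : (3 * q <= j)%N by rewrite /q mulnC leq_trunc_div.
  by rewrite -(ler_nat R) natrM.
set K : R := (2 ^ (q + 2))%N%:R.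
have K1 : 1 <= K by rewrite /K ler1n expn_gt0.
have KE : K = 2 `^ ((q + 2)%N%:R) by rewrite powR_mulrn // /K natrX.
have hKW : K * K `^ (2 - eps) = K `^ (3 - eps).
  have -> : 2 - eps = (3 - eps) - 1 by ring.
  by rewrite mulr_powRB1 //; lra.
have hpos : 0 <= K `^ (2 - eps) by exact: powR_ge0.
have step1 : (C0 * K `^ (2 - eps)) *+ 2 *+ (2 ^ (q + 2))%N.*2.+1 <= 6 * C0 * K `^ (3 - eps).
  rewrite -hKW; set P := K `^ (2 - eps) in hpos *; rewrite -mulrnA.
  have -> : (2 * (2 ^ (q + 2))%N.*2.+1)%N = (4 * (2 ^ (q + 2))%N + 2)%N by rewrite -addnn; lia.
  rewrite -[C0 * P *+ _]mulr_natr natrD natrM -/K.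
  have h0 : 0 <= C0 * P by apply: mulr_ge0 => //; lra.
  have : 0 <= C0 * P * (K - 1) by apply: mulr_ge0 => //; lra.
  lra.
apply: (le_trans step1).
rewrite -[6 * C0 * _ * _]mulrA ler_pM2l; last lra.
rewrite KE -powRrM -[(2:R) ^+ j]powR_mulrn; last lra. rewrite -powRrM -powRD; last by apply/implyP => _; apply/eqP; lra.
apply: ler_powR; first lra.
rewrite natrD.
nra.
Qed.

Lemma aux_j j : (j + 3 <= (j %/ 3 + 2) * 3)%N.
Proof. have h1 := divn_eq j 3; have h2 := ltn_pmod j (isT : 0 < 3)%N. lia. Qed.
Lemma aux_i (r : int) (k : nat) : (absz r <= k)%N -> (absz (r + k%:Z)%R < k.*2.+1)%N.
Proof. lia. Qed.
Lemma aux_o (r : int) (k : nat) : (absz r <= k)%N -> ((absz (r + k%:Z))%:Z - k%:Z = r)%R.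
Proof. lia. Qed.

Lemma mem_bigU (R : realType) m (F : 'I_m -> set R) (i0 : 'I_m) (x : R) :
  F i0 x -> (\big[setU/set0]_(i < m) F i) x.
Proof. by move=> h; rewrite (bigD1 i0) //=; left. Qed.

Theorem lemma3p4 (R : realType) (eps C0 A : R) :
  0 < eps < 1 -> 0 < C0 -> 1 <= A ->
  exists (delta : R) (N0 : nat) (C : R),
    0 < delta /\ 0 < C /\
    forall (n : int) (j : nat), (N0 <= `|n|)%N ->
      (lebesgue_measure (badset eps C0 A n (2 ^+ j)) <=
        (C * ((2 ^+ j : R) `^ (1 - delta)))%:E)%E.
Proof.
move=> he C00 A1; have /andP[e0 e1] := he.
set B := 3 + 4 * A + 4 * C0.
have B0 : 0 <= A * B by apply: mulr_ge0; rewrite /B; lra.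
have hN := archi_boundP B0.
exists (eps / 3), (Num.bound (A * B)), (6 * C0 * 2 `^ (2 * (3 - eps))).
split; first lra.
split; first by apply: mulr_gt0; [lra | apply: powR_gt0; lra].
move=> n j hn.
set k := (2 ^ (j %/ 3 + 2))%N.
set K : R := k%:R.
set W := C0 * K `^ (2 - eps).
pose f := fun r : int => (r ^+ 3 - r ^+ 2 - 2 * n * r).
pose c := fun i : 'I_(k.*2.+1) => (f (i%:Z - k%:Z))%:~R : R.
have K1 : 1 <= K by rewrite /K ler1n expn_gt0.
have W0 : 0 < W by apply: mulr_gt0 => //; apply: powR_gt0; lra.
have sub : badset eps C0 A n (2 ^+ j) `<=` \big[setU/set0]_(i < k.*2.+1) `[c i - W, c i + W]%classic.
  move=> mu [/andP[hM1 hM2] [r [/andP[hr1 hr2] hw]]].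
  set x := `|r%:~R : R| in hr1 hr2 hw.
  set nu := (n%:~R : R) in hr1 hr2.
  have hnN : (Num.bound (A * B))%:R <= `|nu|.
    by rewrite /nu -intr_norm -natr_absz ler_nat.
  have hnu : `|nu| <= A * x.
    move: hr1; rewrite ler_pdivrMl; [by [] | lra].
  have hxB : B <= x.
    have : A * B <= A * x by lra.
    by rewrite ler_pM2l //; lra.
  have hf : (f r)%:~R = (r%:~R : R) ^+ 3 - (r%:~R) ^+ 2 - 2 * nu * r%:~R.
    rewrite /f !rmorphB !rmorphM /= /nu (_ : (2%:~R : R) = 2) //; ring.
  have M0 : `|mu| <= 2 * (2 ^+ j : R) by lra.
  have hw' : `|mu - ((r%:~R : R) ^+ 3 - (r%:~R) ^+ 2 - 2 * nu * r%:~R)| <= C0 * x `^ (2 - eps) by rewrite -hf.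
  have h8 := @cube_bound R eps C0 A _ _ _ _ he C00 A1 hxB hnu M0 hw'.
  have hxK : x <= K.
    rewrite leNgt; apply/negP => hK.
    have := ltrXn2r 3 (le_trans ler01 K1) hK.
    rewrite /= => h3; move: h8; apply/negP; rewrite -ltNge.
    apply: le_lt_trans h3.
    rewrite (_ : 8 * (2 ^+ j : R) = (2 ^ (j + 3))%N%:R); last first.
      by rewrite expnD natrM natrX mulrC.
    rewrite /K -natrX.
    rewrite ler_nat -expnM leq_exp2l //.
    exact: aux_j.
  have hrk : (absz r <= k)%N.
    by rewrite -(ler_nat R) natr_absz intr_norm.
  have hi := @aux_i _ _ hrk.
  apply: (@mem_bigU R _ _ (Ordinal hi)).
  rewrite /c /= (@aux_o _ _ hrk) in_itv /= -ler_distl -/(f r).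
  apply: (le_trans hw); rewrite ler_pM2l //.
  apply: ge0_ler_powR; rewrite ?nnegrE ?normr_ge0 //; lra.
apply: (le_trans (@leb_union R _ c W _ W0 sub)); rewrite lee_fin.
exact: final_num.
Qed.
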